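(* Let $n\ge 1$ and let $Y\subseteq\mathbb{S}^{n-1}$ be a finite set with $I(Y)=\{0,\pm\alpha\}$ for some real $\alpha\neq 0$ (so $Y$ is a spherical $3$-distance set). If $|Y|>2n$, then $1/\alpha$ is an integer.
   Context: $\mathbb{S}^{n-1}$ is the unit sphere in $\mathbb{R}^n$. For $Y\subseteq\mathbb{R}^n$, $I(Y)=\{\mathbf{x}\cdot\mathbf{y}:\mathbf{x},\mathbf{y}\in Y,\ \mathbf{x}\neq\mathbf{y}\}$. *)

(* Defs.v *)
From mathcomp Require Import all_boot all_order all_algebra.
From mathcomp Require Import reals.
Set Implicit Arguments. Unset Strict Implicit. Unset Printing Implicit Defensive.
Import Order.TTheory GRing.Theory Num.Theory.
Local Open Scope ring_scope.

Definition dotv (R : realType) (n : nat) (x y : 'rV[R]_n) : R :=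
  \sum_(i < n) x 0 i * y 0 i.

Definition on_sphere (R : realType) (n : nat) (x : 'rV[R]_n) : Prop :=
  dotv x x = 1.

(* t \in I(Y) = { x.y : x, y in Y, x <> y }, Y a finite set given as a
   duplicate-free sequence. *)
Definition in_I (R : realType) (n : nat) (Y : seq 'rV[R]_n) (t : R) : Prop :=
  exists x y, [/\ x \in Y, y \in Y, x != y & dotv x y = t].

(* Main.v *)
Require Import Defs.
From mathcomp Require Import all_boot all_order all_algebra.
From mathcomp Require Import reals.
From mathcomp Require Import all_field zify.
From Stdlib Require Import Classical.
Import Order.TTheory GRing.Theory Num.Theory.
Local Open Scope ring_scope.

Section PolyPart.
Variable R : realType.

Lemma minpoly_ex (l : R) (f0 : {poly rat}) :
  f0 != 0 -> root (map_poly ratr f0) l ->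
  exists q : {poly rat}, [/\ q != 0, root (map_poly ratr q) l &
     forall g : {poly rat}, g != 0 -> root (map_poly ratr g) l -> (size q <= size g)%N].
Proof.
move: {2}(size f0) (leqnn (size f0)) => s; elim: s f0 => [|s IH] f0.
  by rewrite leqn0 size_poly_eq0 => /eqP-> /eqP.
move=> hs f0n0 rf0.
case: (classic (exists g : {poly rat}, [/\ g != 0, root (map_poly ratr g) l & (size g < size f0)%N])).
  move=> [g [gn0 rg lg]]; apply: (IH g) => //; rewrite -ltnS; exact: leq_trans lg hs.
move=> H; exists f0; split => // g gn0 rg; rewrite leqNgt; apply/negP => lg.
by apply: H; exists g.
Qed.
End PolyPart.

Section PolyPart2.
Variable R : realType.

Lemma poly_int_root (p : {poly int}) (l : R) (m : nat) :
  p \is monic -> ('X - l%:P)^+m %| map_poly intr p -> (size p <= 2 * m)%N ->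
  exists k : int, l = k%:~R.
Proof.
move=> mp dv sz.
set pq : {poly rat} := map_poly intr p.
have pqE : map_poly (ratr : rat -> R) pq = map_poly intr p.
  by rewrite /pq -map_poly_comp; apply: eq_map_poly => x /=; rewrite ratr_int.
have pn0 : p != 0 by apply: monic_neq0.
have mpq : pq \is monic by rewrite /pq monic_map.
have pqn0 : pq != 0 by apply: monic_neq0.
have szq : size pq = size p.
  by rewrite /pq size_map_poly_id0 // (monicP mp) rmorph1 oner_neq0.
have m0 : (0 < m)%N.
  rewrite lt0n; apply/eqP => m0; move: sz; rewrite m0 leqn0 size_poly_eq0.
  by rewrite (negbTE pn0).
have rpq : root (map_poly ratr pq) l.
  rewrite pqE -dvdp_XsubCl; apply: dvdp_trans dv.
  by rewrite -{1}(expr1 ('X - l%:P)) dvdp_exp2l.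
have [q [qn0 rq qmin]] := @minpoly_ex R l pq pqn0 rpq.
have dvq : forall f, root (map_poly ratr f) l -> q %| f.
  move=> f rf; apply/modp_eq0P/eqP; apply: contraT => hn.
  have : (size q <= size (f %% q)%R)%N.
    apply: qmin => //.
    have -> : f %% q = f - f %/ q * q by rewrite {2}(divp_eq f q) addrC addKr.
    by rewrite rmorphB rmorphM /= rootE hornerD hornerN hornerM (rootP rq) (rootP rf) mulr0 subrr.
  by rewrite leqNgt ltn_modp qn0.
have sq2 : (1 < size q)%N.
  rewrite ltnNge; apply/negP => /size1_polyC qc; set c := q`_0 in qc.
  move: rq; rewrite qc map_polyC rootC fmorph_eq0 => /eqP c0.
  by move: qn0; rewrite qc c0 eqxx.
have dq : q^`() != 0.
  apply/eqP => h; have := congr1 (fun r : {poly rat} => r`_(size q).-2) h.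
  rewrite coef_deriv coef0 prednK; last by rewrite -ltnS prednK // ltnW.
  rewrite -/(lead_coef q) => /eqP.
  rewrite mulrn_eq0 lead_coef_eq0 (negbTE qn0) orbF.
  by case: (size q) sq2 => [|[|k]].
have nrd : ~~ root (map_poly ratr q^`()) l.
  apply/negP => rd; have := qmin _ dq rd.
  by rewrite leqNgt lt_size_deriv.
have /factor_theorem [s qE] := rq.
have sl : s.[l] != 0.
  move: nrd; rewrite -deriv_map qE derivM derivXsubC mulr1 rootE hornerD hornerM.
  by rewrite hornerXsubC subrr mulr0 add0r.
have key : forall j, (j <= m)%N -> q^+j %| pq.
  elim=> [|j IH] hj; first by rewrite expr0 dvd1p.
  have := IH (ltnW hj); rewrite dvdp_eq => /eqP pE.
  set u := pq %/ q^+j in pE.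
  suff : q %| u.
    rewrite dvdp_eq => /eqP uE; rewrite pE uE -mulrA -exprS.
    by apply: dvdp_mull; apply: dvdpp.
  apply: dvq.
  have : ('X - l%:P)^+((m - j.+1).+1 + j) %| map_poly ratr u * s^+j * ('X - l%:P)^+j.
    rewrite addSnnS subnK //.
    by move: dv; rewrite -pqE pE rmorphM rmorphXn /= qE exprMn mulrA.
  rewrite exprD dvdp_mul2r ?expf_neq0 ?polyXsubC_eq0 //.
  move/(dvdp_trans (dvdp_exp2l ('X - l%:P) (isT : (1 <= (m - j.+1).+1)%N))).
  by rewrite expr1 dvdp_XsubCl rootE hornerM horner_exp mulf_eq0 expf_eq0 (negbTE sl) andbF orbF.
have := dvdp_leq pqn0 (key m (leqnn m)).
move=> hle.
have hs2 : size q = 2%N.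
  have h1 : ((size q).-1 * m < 2 * m)%N.
    rewrite -size_exp; move: hle; rewrite szq => hle.
    have h0 : (0 < size (q ^+ m))%N by rewrite size_poly_gt0 expf_neq0.
    by apply: (leq_trans _ sz); rewrite (prednK h0).
  rewrite ltn_pmul2r // in h1.
  by apply/eqP; rewrite eqn_leq sq2 andbT -(prednK (ltnW sq2)) ltnS.
have sn0 : s != 0 by apply: contraNneq sl => ->; rewrite horner0.
have ss : size s = 1%N.
  have := congr1 (fun r : {poly R} => size r) qE; rewrite /=; rewrite size_map_poly hs2 size_mul ?polyXsubC_eq0 //.
  by rewrite size_XsubC addn2 /= => /eqP; rewrite eqSS => /eqP.
have /size_poly1P [c cn0 sE] : size s == 1%N by rewrite ss.
have c1 : ratr q`_1 = c.
  have := congr1 (fun r : {poly R} => r`_1) qE.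
  by rewrite /= coef_map /= sE coefCM coefB coefX coefC /= subr0 mulr1.
have c0 : ratr q`_0 = - (c * l).
  have := congr1 (fun r : {poly R} => r`_0) qE.
  by rewrite /= coef_map /= sE coefCM coefB coefX coefC /= sub0r mulrN.
set r : rat := - q`_0 / q`_1.
have lr : l = ratr r by rewrite /r fmorph_div rmorphN /= c0 c1 opprK mulrC mulKf.
have rr : pq.[r] = 0.
  have : (map_poly ratr pq).[ratr r] = 0 :> R by rewrite -lr; exact/rootP.
  by rewrite horner_map /= => /eqP; rewrite fmorph_eq0 => /eqP.
pose z : algC := ratr r.
have pqC : map_poly (ratr : rat -> algC) pq = map_poly intr p.
  by rewrite /pq -map_poly_comp; apply: eq_map_poly => x /=; rewrite ratr_int.
have Az : z \in Aint.
  apply: (@root_monic_Aint (map_poly intr p)).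
  - by rewrite -pqC rootE horner_map rr rmorph0.
  - by rewrite monic_map.
  - by apply/polyOverP => i; rewrite coef_map /= rpred_int.
have /intrP [k zk] := Cint_rat_Aint (Crat_rat r) Az.
exists k; rewrite lr.
have : r = k%:~R by apply: (fmorph_inj (ratr : {rmorphism rat -> algC})); rewrite /= ratr_int -zk.
by move=> ->; rewrite ratr_int.
Qed.
End PolyPart2.

Lemma char_poly_conj (F : fieldType) k (E B : 'M[F]_k) :
  E \in unitmx -> char_poly (E *m B *m invmx E) = char_poly B.
Proof.
move=> Eu; rewrite /char_poly /char_poly_mx.
set pE := map_mx polyC E; set pEi := map_mx polyC (invmx E).
have h1 : pE *m pEi = 1%:M by rewrite -map_mxM mulmxV // map_mx1.
have -> : 'X%:M - map_mx polyC (E *m B *m invmx E) =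
          pE *m ('X%:M - map_mx polyC B) *m pEi.
  rewrite !map_mxM mulmxBr mulmxBl mul_mx_scalar -scalemxAl h1.
  by rewrite -mul_scalar_mx mulmx1.
rewrite !det_mulmx mulrAC -det_mulmx h1 det1 mul1r //.
Qed.

Lemma eig_mult (F : fieldType) (m n : nat) (B : 'M[F]_(m + n)) (l : F) :
  (\rank (B - l%:M)%R <= n)%N -> ('X - l%:P)^+m %| char_poly B.
Proof.
move=> rk.
set A := B - l%:M.
set K := kermx A.
have rK : (m <= \rank K)%N.
  rewrite mxrank_ker; move: (\rank A) rk => r hr; lia.
set E := row_ebase K.
have Eu : E \in unitmx by apply: row_ebase_unit.
have hE : usubmx E *m A = 0.
  have -> : usubmx E = pid_mx m *m E.
    by rewrite pid_mx_row -{2}(vsubmxK E) mul_row_col mul1mx mul0mx addr0.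
  have -> : (pid_mx m : 'M[F]_(m, m + n)) = pid_mx m *m (pid_mx (\rank K) : 'M[F]_(m + n)).
    by rewrite mul_pid_mx; congr pid_mx; lia.
  rewrite -[X in X *m A]mulmxA.
  have -> : (pid_mx (\rank K) : 'M[F]_(m + n)) *m E = invmx (col_ebase K) *m K.
    by rewrite -[X in _ = _ *m X](mulmx_ebase K) -!mulmxA mulKmx ?col_ebase_unit.
  have KA : K *m A = 0 by exact: mulmx_ker.
  by rewrite mulmxA -mulmxA KA mulmx0.
have hB : usubmx E *m B = l *: usubmx E.
  have : B = A + l%:M by rewrite /A subrK.
  by move=> ->; rewrite mulmxDr hE add0r mul_mx_scalar.
set C := E *m B *m invmx E.
have uC : usubmx C = row_mx l%:M 0.
  rewrite /C -!mul_usub_mx hB -scalemxAl mul_usub_mx mulmxV //.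
  rewrite (scalar_mx_block m n 1) /block_mx col_mxKu scale_row_mx scaler0.
  by rewrite scalemx1.
have CE : C = block_mx l%:M 0 (lsubmx (dsubmx C)) (rsubmx (dsubmx C)).
  by rewrite /block_mx hsubmxK -uC vsubmxK.
rewrite -(@char_poly_conj _ _ E B Eu) -/C CE /char_poly /char_poly_mx.
rewrite (scalar_mx_block m n) map_block_mx map_mx0 opp_block_mx add_block_mx.
rewrite subrr det_lblock map_scalar_mx /= -(raddfB (@scalar_mx _ m) 'X (l%:P)) /=.
by rewrite det_scalar dvdp_mulr.
Qed.

Theorem theorem7p2 (R : realType) (n : nat) (Y : seq 'rV[R]_n) (alpha : R) :
  (1 <= n)%N ->
  uniq Y ->
  (forall x, x \in Y -> on_sphere x) ->
  alpha != 0 ->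
  (forall t : R, in_I Y t <-> (t = 0 \/ t = alpha \/ t = - alpha)) ->
  (2 * n < size Y)%N ->
  exists k : int, alpha^-1 = k%:~R.
Proof.
move=> n1 uY sph an0 hI hN.
set m := (size Y - n)%N.
have hmn : (m + n)%N = size Y by rewrite /m; lia.
pose v (i : nat) := nth 0 Y i.
have vY : forall i : 'I_(m + n), v i \in Y.
  by move=> i; apply: mem_nth; rewrite -hmn.
pose d (i j : 'I_(m + n)) := dotv (v i) (v j).
pose Sint : 'M[int]_(m + n) := \matrix_(i, j)
  (if i == j then 0 else if d i j == alpha then 1 else if d i j == - alpha then -1 else 0).
pose S : 'M[R]_(m + n) := map_mx intr Sint.
pose X : 'M[R]_(m + n, n) := \matrix_(i, j) (v i) 0 j.
set l : R := - alpha^-1.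
have GE : X *m X^T = alpha *: (S - l%:M).
  apply/matrixP => i j; rewrite !mxE.
  have -> : \sum_j0 X i j0 * X^T j0 j = d i j.
    by rewrite /d /dotv; apply: eq_bigr => k _; rewrite !mxE.
  case: eqP => [<-|/eqP ij] /=.
    by rewrite mulr1n sub0r /l opprK mulfV //; apply: sph.
  rewrite mulr0n subr0.
  have dI : in_I Y (d i j).
    exists (v i), (v j); split => //; rewrite /v nth_uniq // -?hmn //.
  have [h0|[ha|hna]] := (proj1 (hI _) dI).
  - rewrite h0 eq_sym (negbTE an0) eq_sym oppr_eq0 (negbTE an0) /=.
    by rewrite mulr0.
  - by rewrite ha eqxx /= mulr1.
  - have : alpha != - alpha.
      by rewrite -addr_eq0 -mulr2n mulrn_eq0 (negbTE an0).
    by move/negbTE => H; rewrite hna eq_sym H eqxx /= mulrN1.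
have rk : (\rank (S - l%:M)%R <= n)%N.
  have -> : (S - l%:M)%R = alpha^-1 *: (X *m X^T) by rewrite GE scalerA mulVf // scale1r.
  apply: leq_trans (mxrank_scale _ _) _.
  exact: leq_trans (mxrankM_maxl _ _) (rank_leq_col _).
have dv := @eig_mult _ m n S l rk.
have cS : char_poly S = map_poly intr (char_poly Sint) by rewrite map_char_poly.
rewrite cS in dv.
have sz : (size (char_poly Sint) <= 2 * m)%N by rewrite size_char_poly; lia.
have [k lk] := @poly_int_root R _ l m (char_poly_monic Sint) dv sz.
exists (- k); rewrite rmorphN /= -lk /l opprK //.
Qed.
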